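(* Let $k$ be a perfect field of characteristic $p>0$, $R=k[x_1,\ldots,x_n]$, and let $f_1,\ldots,f_m\in R$ be a regular sequence, $A=R/(f_1,\ldots,f_m)$. For each $i$ fix a lift $\widetilde f_i\in W_2(k)[x_1,\ldots,x_n]$ of $f_i$ and set $P_{f_i}=P(\widetilde f_i)$. Then $\operatorname{Spec}A$ is Frobenius liftable if and only if there exist $h_1,\ldots,h_n\in R$ and $g_1,\ldots,g_m\in R$ such that for every $i\in\{1,\ldots,m\}$ $$P_{f_i}+g_i^p\equiv\sum_{k=1}^n\Big(\frac{\partial f_i}{\partial x_k}\Big)^ph_k\pmod{(f_1,\ldots,f_m)}.$$
   Context: $W_2(k)$ is the ring of length-$2$ Witt vectors with Frobenius $\sigma(a_0,a_1)=(a_0^p,a_1^p)$. Let $\widetilde R=W_2(k)[x_1,\ldots,x_n]$ and $\widetilde F:\widetilde R\to\widetilde R$, $\sum_Ia_Ix^I\mapsto\sum_I\sigma(a_I)x^{pI}$. For $\widetilde f\in\widetilde R$, $P(\widetilde f)\in R$ is the unique element with $pP(\widetilde f)=\widetilde F(\widetilde f)-\widetilde f^p$ (using $R\cong p\widetilde R$ via multiplication by $p$); changing the lift of $f$ changes $P$ by an arbitrary $p$-th power. A $k$-scheme $Y$ is Frobenius liftable if there are a flat $W_2(k)$-scheme $\widetilde Y$ with $\widetilde Y\times_{W_2(k)}\operatorname{Spec}k\cong Y$ and a morphism $\widetilde F:\widetilde Y\to\widetilde Y$ over $\sigma$ restricting to the absolute Frobenius of $Y$. *)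

(* Defs.v *)
From HB Require Import structures.
From mathcomp Require Import all_boot all_order all_algebra.
From mathcomp Require Import mpoly.
Set Implicit Arguments. Unset Strict Implicit. Unset Printing Implicit Defensive.
Import GRing.Theory.
Local Open Scope ring_scope.

Definition in_ideal (R : comNzRingType) (m : nat) (f : 'I_m -> R) (x : R) : Prop :=
  exists c : 'I_m -> R, x = \sum_(j < m) c j * f j.

Definition in_ideal_lt (R : comNzRingType) (m : nat) (f : 'I_m -> R) (i : nat)
    (x : R) : Prop :=
  exists c : 'I_m -> R, x = \sum_(j < m | (j < i)%N) c j * f j.

Definition regular_seq (R : comNzRingType) (m : nat) (f : 'I_m -> R) : Prop :=
  (forall (i : 'I_m) (g : R),
      in_ideal_lt f i (g * f i) -> in_ideal_lt f i g)
  /\ ~ in_ideal f 1.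

Definition perfect_field (k : fieldType) (p : nat) : Prop :=
  forall x : k, exists y : k, y ^+ p = x.

(* W together with piW : W -> k and sigma : W -> W is (isomorphic to) the ring
   W_2(k) of length-2 Witt vectors with its Witt vector Frobenius:
   piW is surjective, ker piW = pW, and multiplication by p induces
   W/pW = k  ~=  pW (i.e. p w = 0 iff w in ker piW); sigma lifts Frobenius.
   For perfect k these properties characterize (W_2(k), sigma) uniquely up to
   unique isomorphism. *)
Definition is_W2 (k : fieldType) (p : nat) (W : comNzRingType)
    (piW : {rmorphism W -> k}) (sigma : {rmorphism W -> W}) : Prop :=
  [/\ forall x : k, exists w : W, piW w = x,
      forall w : W, piW w = 0 <-> exists v : W, w = p%:R * v,
      forall w : W, p%:R * w = 0 <-> piW w = 0
    & forall w : W, piW (sigma w) = piW w ^+ p].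

Definition Ftilde (W : comNzRingType) (n p : nat) (sigma : {rmorphism W -> W})
    (F : {mpoly W[n]}) : {mpoly W[n]} :=
  mmap (fun c : W => (sigma c)%:MP_[n]) (fun i : 'I_n => 'X_i ^+ p) F.

(* Pf = P(Ft): p * (any lift of Pf) = Ftilde(Ft) - Ft^p.  (This determines Pf
   uniquely since R ~= p W[x] via multiplication by p.) *)
Definition is_P (k : fieldType) (p : nat) (W : comNzRingType) (n : nat)
    (piW : {rmorphism W -> k}) (sigma : {rmorphism W -> W})
    (Ft : {mpoly W[n]}) (Pf : {mpoly k[n]}) : Prop :=
  exists Pt : {mpoly W[n]},
    map_mpoly piW Pt = Pf /\ (p%:R : W) *: Pt = Ftilde p sigma Ft - Ft ^+ p.

(* Spec A, A = k[x_1..x_n]/(f_1..f_m), is Frobenius liftable: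
   there is a flat W_2(k)-algebra At (flatness over W_2(k) expressed by the
   local criterion: p-torsion of At equals p At), a k-algebra isomorphism
   At/pAt ~= A (realized by surjections piA : At -> B, q : k[x] -> B with
   kernels p At and (f_1..f_m), compatible with the k-structures), and a ring
   endomorphism Ft of At over sigma reducing to the absolute Frobenius of A. *)
Definition frobenius_liftable (k : fieldType) (p : nat) (W : comNzRingType)
    (piW : {rmorphism W -> k}) (sigma : {rmorphism W -> W}) (n m : nat)
    (f : 'I_m -> {mpoly k[n]}) : Prop :=
  exists (At : comPzRingType) (iota : {rmorphism W -> At})
         (Ft : {rmorphism At -> At}) (B : comPzRingType)
         (q : {rmorphism {mpoly k[n]} -> B}) (piA : {rmorphism At -> B}),
    (forall a : At, iota p%:R * a = 0 -> exists b : At, a = iota p%:R * b)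
    /\ (forall a : At, piA a = 0 <-> exists b : At, a = iota p%:R * b)
    /\ (forall b : B, exists a : At, piA a = b)
    /\ (forall r : {mpoly k[n]}, q r = 0 <-> in_ideal f r)
    /\ (forall b : B, exists r : {mpoly k[n]}, q r = b)
    /\ (forall w : W, piA (iota w) = q (piW w)%:MP_[n])
    /\ (forall w : W, Ft (iota w) = iota (sigma w))
    /\ (forall a : At, piA (Ft a) = piA a ^+ p).

(* Main.v *)
Require Import Defs.
From HB Require Import structures.
From mathcomp Require Import all_boot all_order all_algebra.
From mathcomp Require Import mpoly.
From mathcomp Require Import ring.
From mathcomp Require Import ring_quotient generic_quotient.
From Stdlib Require Import ClassicalEpsilon.
Import GRing.Theory.
Local Open Scope ring_scope.
Set Implicit Arguments. Unset Strict Implicit. Unset Printing Implicit Defensive.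


Lemma choice_fun (A B : Type) (P : A -> B -> Prop) :
  (forall a, exists b, P a b) -> exists g : A -> B, forall a, P a (g a).
Proof.
move=> H; exists (fun a => proj1_sig (constructive_indefinite_description _ (H a))).
by move=> a; case: (constructive_indefinite_description _ (H a)).
Qed.

Definition mk_rmorph (R S : pzRingType) (f : R -> S) (Ha : additive f)
  (Hm : multiplicative f) : {rmorphism R -> S} :=
  HB.pack f (GRing.isAdditive.Build R S f Ha) (GRing.isMultiplicative.Build R S f Hm).

Lemma mk_rmorphE (R S : pzRingType) (f : R -> S) Ha Hm x : @mk_rmorph R S f Ha Hm x = f x.
Proof. by []. Qed.

Lemma mpoly_fun_ext (n : nat) (R : comNzRingType) (S : comPzRingType)
  (g1 g2 : {mpoly R[n]} -> S) :
  {morph g1 : x y / x + y} -> {morph g1 : x y / x * y} -> g1 1 = 1 ->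
  {morph g2 : x y / x + y} -> {morph g2 : x y / x * y} -> g2 1 = 1 ->
  (forall c, g1 c%:MP = g2 c%:MP) -> (forall i, g1 'X_i = g2 'X_i) ->
  forall q, g1 q = g2 q.
Proof.
move=> D1 M1 O1 D2 M2 O2 hC hX.
have Z1 : g1 0 = 0 by apply: (@addrI _ (g1 0)); rewrite -D1 !addr0.
have Z2 : g2 0 = 0 by apply: (@addrI _ (g2 0)); rewrite -D2 !addr0.
elim/mpolyind => [|c m q _ _ ih]; first by rewrite Z1 Z2.
rewrite D1 D2 ih -mul_mpolyC M1 M2 hC mpolyXE_id; congr (_ * _ + _).
rewrite (big_morph g1 M1 O1) (big_morph g2 M2 O2); apply: eq_bigr => i _.
elim: (m i) => [|e ihe]; first by rewrite !expr0 O1 O2.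
by rewrite !exprS M1 M2 ihe hX.
Qed.

Lemma mpoly_rmorph_ext (n : nat) (R : comNzRingType) (S : comPzRingType)
  (g1 g2 : {rmorphism {mpoly R[n]} -> S}) :
  (forall c, g1 c%:MP = g2 c%:MP) -> (forall i, g1 'X_i = g2 'X_i) ->
  forall q, g1 q = g2 q.
Proof.
move=> hC hX; apply: mpoly_fun_ext => //; do ?[exact: rmorphD|exact: rmorphM|exact: rmorph1].
Qed.

Section Ideal.
Variables (R : comNzRingType) (m : nat) (f : 'I_m -> R).

Lemma in_ideal0 : in_ideal f 0.
Proof. by exists (fun=> 0); rewrite big1 // => j _; rewrite mul0r. Qed.

Lemma in_idealD x y : in_ideal f x -> in_ideal f y -> in_ideal f (x + y).
Proof.
move=> [c ->] [d ->]; exists (fun j => c j + d j).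
by rewrite -big_split; apply: eq_bigr => j _; rewrite mulrDl.
Qed.

Lemma in_idealMl a x : in_ideal f x -> in_ideal f (a * x).
Proof.
move=> [c ->]; exists (fun j => a * c j).
by rewrite mulr_sumr; apply: eq_bigr => j _; rewrite mulrA.
Qed.

Lemma in_idealN x : in_ideal f x -> in_ideal f (- x).
Proof. by move=> h; rewrite -mulN1r; apply: in_idealMl. Qed.

Lemma in_idealB x y : in_ideal f x -> in_ideal f y -> in_ideal f (x - y).
Proof. by move=> hx hy; apply: in_idealD => //; apply: in_idealN. Qed.

Lemma in_ideal_gen i : in_ideal f (f i).
Proof.
exists (fun j => (j == i)%:R); rewrite (bigD1 i) //= eqxx mul1r big1 ?addr0 //.
by move=> j /negPf ->; rewrite mul0r.
Qed.

Lemma in_ideal_sum (I : finType) (F : I -> R) :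
  (forall i, in_ideal f (F i)) -> in_ideal f (\sum_i F i).
Proof.
move=> h; elim/big_rec: _ => [|i x _ hx]; [exact: in_ideal0 | exact: in_idealD].
Qed.

Lemma in_idealXn x e : in_ideal f x -> (0 < e)%N -> in_ideal f (x ^+ e).
Proof. move=> hx; case: e => [//|e] _; rewrite exprSr; exact: in_idealMl. Qed.

End Ideal.

Lemma in_ideal_morph (R S : comNzRingType) (g : {rmorphism R -> S}) m (f : 'I_m -> R) x :
  in_ideal f x -> in_ideal (fun j => g (f j)) (g x).
Proof.
move=> [c ->]; exists (fun j => g (c j)); rewrite rmorph_sum /=.
by apply: eq_bigr => j _; rewrite rmorphM.
Qed.


Lemma mderivXi (n : nat) (R : comNzRingType) (i k : 'I_n) :
  mderiv k ('X_i : {mpoly R[n]}) = (i == k)%:R.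
Proof.
rewrite mderivX mnm1E; case: eqP => [->|_]; last by rewrite scale0r.
have -> : (U_(k) - U_(k) = 0)%MM by apply/mnmP => j; rewrite mnmBE subnn mnm0E.
by rewrite mpolyX0 scale1r.
Qed.

Section WittFacts.
Variables (k : fieldType) (p : nat) (W : comNzRingType).
Variables (piW : {rmorphism W -> k}) (sigma : {rmorphism W -> W}) (n : nat).
Hypothesis Hchar : p \in [pchar k].
Hypothesis HW : is_W2 p piW sigma.

Local Notation red := (map_mpoly (n:=n) piW).

Lemma piW_p : piW p%:R = 0.
Proof. by rewrite rmorph_nat; apply/eqP; case/andP: Hchar. Qed.

Lemma pW_pp : (p%:R * p%:R : W) = 0.
Proof. by case: HW => _ _ H3 _; apply/H3; exact: piW_p. Qed.

Lemma mp_pp : (p%:R * p%:R : {mpoly W[n]}) = 0.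
Proof. by rewrite -natrM -mpolyC_nat natrM pW_pp mpolyC0. Qed.

Lemma mulpE (a : {mpoly W[n]}) m : (p%:R * a)@_m = p%:R * a@_m.
Proof. by rewrite -mpolyC_nat mcoeffCM. Qed.

Lemma pchar_kx : p \in [pchar {mpoly k[n]}].
Proof. exact: (rmorph_pchar (mpolyC n (R := k))). Qed.

Lemma kx_p0 : (p%:R : {mpoly k[n]}) = 0.
Proof. by apply/eqP; case/andP: pchar_kx. Qed.

Lemma red_p a : red (p%:R * a) = 0.
Proof. by rewrite rmorphM rmorph_nat kx_p0 mul0r. Qed.

Lemma red_pp a : red (p%:R * a) = red (p%:R) * red a.
Proof. by rewrite rmorphM. Qed.

Lemma red_surj (r : {mpoly k[n]}) : exists a, red a = r.
Proof.
case: HW => H1 _ _ _.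
elim/mpolyind: r => [|c m q _ _ [a ha]]; first by exists 0; rewrite rmorph0.
have [w hw] := H1 c; exists (w *: 'X_[m] + a).
by rewrite rmorphD /= map_mpolyZ map_mpolyX hw ha.
Qed.

Lemma red_coef0 (a : {mpoly W[n]}) :
  (forall m, piW a@_m = 0) -> exists b, a = p%:R * b.
Proof.
case: HW => _ H2 _ _.
elim/mpolyind: a => [|c m q hm _ ih] hc; first by exists 0; rewrite mulr0.
have qm : q@_m = 0 by apply: memN_msupp_eq0.
have hq : forall m', piW q@_m' = 0.
  move=> m'; case: (eqVneq m m') => [<-|ne]; first by rewrite qm rmorph0.
  have := hc m'; rewrite mcoeffD mcoeffZ mcoeffX (negbTE ne) mulr0 add0r //.
have [b hb] := ih hq.
have : piW c = 0 by have := hc m; rewrite mcoeffD mcoeffZ mcoeffX eqxx mulr1 qm addr0.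
move/H2 => [v hv]; exists (v *: 'X_[m] + b).
by rewrite mulrDr -hb hv -mpolyC_nat mul_mpolyC scalerA.
Qed.

Lemma red_ker (a : {mpoly W[n]}) : red a = 0 -> exists b, a = p%:R * b.
Proof.
move=> ha; apply: red_coef0 => m.
by rewrite -mcoeff_map_mpoly ha mcoeff0.
Qed.

Lemma red_tors (a : {mpoly W[n]}) : p%:R * a = 0 -> red a = 0.
Proof.
case: HW => _ _ H3 _ ha; apply/mpolyP => m.
rewrite mcoeff_map_mpoly mcoeff0; apply/H3.
by rewrite -mulpE ha mcoeff0.
Qed.


Lemma red_Ftilde (G : {mpoly W[n]}) : red (Ftilde p sigma G) = red G ^+ p.
Proof.
case: HW => _ _ _ H4.
pose g1 : {rmorphism {mpoly W[n]} -> {mpoly k[n]}} :=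
  red \o mmap (@mpolyC n W \o sigma) (fun i : 'I_n => 'X_i ^+ p).
pose g2 : {rmorphism {mpoly W[n]} -> {mpoly k[n]}} :=
  Frobenius_aut pchar_kx \o red.
have := @mpoly_rmorph_ext n W _ g1 g2.
rewrite /g1 /g2 /= => -> //.
- move=> c; rewrite /= mmapC /= !map_mpolyC Frobenius_autE; rewrite -rmorphXn; congr (_ %:MP); exact: H4.
- by move=> i; rewrite /= mmapX mmap1U rmorphXn /= map_mpolyX Frobenius_autE.
Qed.

Lemma red_mderiv i (G : {mpoly W[n]}) : red (mderiv i G) = mderiv i (red G).
Proof.
elim/mpolyind: G => [|c m q _ _ ih]; first by rewrite !raddf0.
rewrite !raddfD /= ih; congr (_ + _).
rewrite mderivZ mderivX.
have -> : c *: ((m i)%:R *: 'X_[m - U_(i)]) = (c * (m i)%:R) *: 'X_[m - U_(i)] :> {mpoly W[n]} by rewrite scalerA.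
by rewrite !map_mpolyZ mderivZ !map_mpolyX mderivX rmorphM rmorph_nat scalerA.
Qed.

End WittFacts.


Section Taylor.
Variables (p n : nat) (W : comNzRingType) (sigma : {rmorphism W -> W}).
Hypothesis pp0 : (p%:R * p%:R : W) = 0.
Variable h : 'I_n -> {mpoly W[n]}.

Definition FT : {rmorphism {mpoly W[n]} -> {mpoly W[n]}} :=
  mmap (@mpolyC n W \o sigma) (fun i : 'I_n => 'X_i ^+ p).

Lemma FtildeE G : Ftilde p sigma G = FT G.
Proof. by []. Qed.

Definition Ed (G : {mpoly W[n]}) := \sum_(k < n) FT (mderiv k G) * h k.
Definition Tay (G : {mpoly W[n]}) := FT G + p%:R * Ed G.
Definition psi : {rmorphism {mpoly W[n]} -> {mpoly W[n]}} :=
  mmap (@mpolyC n W \o sigma) (fun i : 'I_n => 'X_i ^+ p + p%:R * h i).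

Lemma mpp0 : (p%:R * p%:R : {mpoly W[n]}) = 0.
Proof. by rewrite -natrM -mpolyC_nat natrM pp0 mpolyC0. Qed.

Lemma EdD : {morph Ed : x y / x + y}.
Proof.
move=> x y; rewrite /Ed -big_split; apply: eq_bigr => k _.
by rewrite mderivD rmorphD mulrDl.
Qed.

Lemma EdM x y : Ed (x * y) = FT y * Ed x + FT x * Ed y.
Proof.
rewrite /Ed !mulr_sumr -big_split; apply: eq_bigr => k _.
rewrite mderivM rmorphD !rmorphM /=; ring.
Qed.

Lemma EdC c : Ed c%:MP = 0.
Proof. by rewrite /Ed big1 // => k _; rewrite mderivC rmorph0 mul0r. Qed.

Lemma TayD : {morph Tay : x y / x + y}.
Proof. by move=> x y; rewrite /Tay rmorphD EdD mulrDr; ring. Qed.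

Lemma TayM : {morph Tay : x y / x * y}.
Proof.
move=> x y; rewrite /Tay rmorphM EdM.
have -> : (FT x + p%:R * Ed x) * (FT y + p%:R * Ed y) =
  FT x * FT y + p%:R * (FT y * Ed x + FT x * Ed y) + (p%:R * p%:R) * (Ed x * Ed y) by ring.
by rewrite mpp0 mul0r addr0.
Qed.

Lemma Tay1 : Tay 1 = 1.
Proof. by rewrite /Tay -mpolyC1 EdC mulr0 addr0 rmorph1. Qed.

Lemma taylor G : psi G = Tay G.
Proof.
apply: (@mpoly_fun_ext n W _ psi Tay) => //.
- exact: rmorphD.
- exact: rmorphM.
- exact: rmorph1.
- exact: TayD.
- exact: TayM.
- exact: Tay1.
- by move=> c; rewrite /Tay EdC mulr0 addr0 /psi /FT /= !mmapC.
- move=> i; rewrite /psi /Tay /FT /= !mmapX !mmap1U; congr (_ + _ * _).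
  rewrite /Ed (bigD1 i) //= big1 ?addr0.
    by rewrite mderivXi eqxx rmorph1 mul1r.
  by move=> j /negPf ji; rewrite mderivXi eq_sym ji rmorph0 mul0r.
Qed.

End Taylor.


Lemma split_lt (R : nmodType) (m : nat) (G : 'I_m -> R) (io : 'I_m) :
  \sum_(j < m | (j < io.+1)%N) G j = G io + \sum_(j < m | (j < io)%N) G j.
Proof.
rewrite (bigD1 io) ?ltnSn //=; congr (_ + _); apply: eq_bigl => j.
by rewrite ltnS leq_eqVlt -val_eqE /=; case: (ltngtP j io).
Qed.

Section Flat.
Variables (k : fieldType) (p : nat) (W : comNzRingType).
Variables (piW : {rmorphism W -> k}) (sigma : {rmorphism W -> W}) (n m : nat).
Hypothesis Hchar : p \in [pchar k].
Hypothesis HW : is_W2 p piW sigma.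
Variables (f : 'I_m -> {mpoly k[n]}) (F : 'I_m -> {mpoly W[n]}).
Hypothesis hF : forall j, map_mpoly piW (F j) = f j.
Hypothesis hreg : regular_seq f.

Local Notation red := (map_mpoly (n:=n) piW).

Lemma lift_rel_lt (i : nat) : (i <= m)%N -> forall c : 'I_m -> {mpoly W[n]},
  red (\sum_(j < m | (j < i)%N) c j * F j) = 0 ->
  exists d : 'I_m -> {mpoly W[n]},
    \sum_(j < m | (j < i)%N) c j * F j = p%:R * \sum_(j < m | (j < i)%N) d j * F j.
Proof.
elim: i => [_ c _|i ih lim c hc].
  by exists (fun=> 0); rewrite !big_pred0 ?mulr0.
pose io : 'I_m := Ordinal lim.
have Eio : i = io by [].
move: hc; rewrite Eio split_lt => hc.
have hS : red (c io) * f io + \sum_(j < m | (j < io)%N) red (c j) * f j = 0.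
  rewrite -[RHS]hc rmorphD rmorph_sum /= rmorphM /= hF; congr (_ + _).
  by apply: eq_bigr => j _; rewrite rmorphM /= hF.
have hc' : red (c io) * f io = \sum_(j < m | (j < io)%N) (- red (c j)) * f j.
  rewrite (eq_bigr (fun j => - (red (c j) * f j))); last by move=> j _; rewrite mulNr.
  by rewrite sumrN; apply/eqP; rewrite -addr_eq0 hS.
have [e he] : in_ideal_lt f io (red (c io)).
  by case: hreg => H _; apply: H; exists (fun j => - red (c j)).
have [et het] : exists et : 'I_m -> {mpoly W[n]}, forall j, red (et j) = e j.
  have [g hg] := @choice_fun 'I_m {mpoly W[n]} (fun j b => red b = e j) (fun j => red_surj HW (e j)).
  by exists g.
have [del hdel] : exists del, c io - \sum_(j < m | (j < io)%N) et j * F j = p%:R * del.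
  apply: (red_ker HW); rewrite rmorphB rmorph_sum /= he; apply/eqP; rewrite subr_eq0; apply/eqP.
  by apply: eq_bigr => j _; rewrite rmorphM /= het hF.
pose c' j := c j + et j * F io.
have Esum : \sum_(j < m | (j < io)%N) c' j * F j =
   \sum_(j < m | (j < io)%N) c j * F j + F io * \sum_(j < m | (j < io)%N) et j * F j.
  rewrite mulr_sumr -big_split; apply: eq_bigr => j _; rewrite /c' /=; ring.
have Ecio : c io = \sum_(j < m | (j < io)%N) et j * F j + p%:R * del.
  by rewrite -hdel; ring.
have Etot : c io * F io + \sum_(j < m | (j < io)%N) c j * F j =
   \sum_(j < m | (j < io)%N) c' j * F j + p%:R * (del * F io).
  rewrite Esum Ecio; ring.
have hred : red (\sum_(j < m | (j < io)%N) c' j * F j) = 0.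
  have : red (\sum_(j < m | (j < io)%N) c' j * F j + p%:R * (del * F io)) = 0.
    by rewrite -Etot.
  by rewrite rmorphD /= (red_p _ Hchar) addr0.
have [d' hd'] := ih (ltnW lim) c' hred.
exists (fun j => if j == io then del else d' j).
rewrite (split_lt _ io) eqxx Etot hd'.
have -> : \sum_(j < m | (j < io)%N) (if j == io then del else d' j) * F j =
          \sum_(j < m | (j < io)%N) d' j * F j.
  apply: eq_bigr => j hj; case: eqP => // ej.
  by move: hj; rewrite ej ltnn.
ring.
Qed.

Lemma lift_rel (c : 'I_m -> {mpoly W[n]}) :
  red (\sum_j c j * F j) = 0 ->
  exists d : 'I_m -> {mpoly W[n]}, \sum_j c j * F j = p%:R * \sum_j d j * F j.
Proof.
have E (G : 'I_m -> {mpoly W[n]}) : \sum_j G j = \sum_(j < m | (j < m)%N) G j.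
  by apply: eq_bigl => j; rewrite ltn_ord.
move=> h; have hh := @lift_rel_lt m (leqnn m) c.
have [|d hd] := hh; first by rewrite -E.
by exists d; rewrite E hd -E.
Qed.

Lemma flat_quot (a : {mpoly W[n]}) : in_ideal F (p%:R * a) ->
  exists b, in_ideal F (a - p%:R * b).
Proof.
move=> [c hc]; have [|d hd] := @lift_rel c.
  by rewrite -hc (red_p _ Hchar).
have [b hb] : exists b, a - \sum_j d j * F j = p%:R * b.
  apply: (red_ker HW); apply: (red_tors HW).
  by rewrite mulrBr hc hd subrr.
exists b; rewrite -hb; exists d; ring.
Qed.

Lemma lift_ideal2 (x : {mpoly W[n]}) : in_ideal f (red x) ->
  exists b, in_ideal F (x - p%:R * b).
Proof.
move=> [c hc].
have [ct hct] := @choice_fun 'I_m {mpoly W[n]} (fun j b => red b = c j) (fun j => red_surj HW (c j)).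
have [b hb] : exists b, x - \sum_j ct j * F j = p%:R * b.
  apply: (red_ker HW); rewrite rmorphB /= hc rmorph_sum /=; apply/eqP; rewrite subr_eq0; apply/eqP.
  by apply: eq_bigr => j _; rewrite rmorphM /= hct hF.
by exists b; rewrite -hb; exists ct; ring.
Qed.

Lemma lift_ideal (x : {mpoly W[n]}) : in_ideal f (red x) -> in_ideal F (p%:R * x).
Proof.
move=> /lift_ideal2 [b [c hc]]; exists (fun j => p%:R * c j).
have -> : p%:R * x = p%:R * (x - p%:R * b) + (p%:R * p%:R) * b by ring.
rewrite (mp_pp n Hchar HW) mul0r addr0 hc mulr_sumr; apply: eq_bigr => j _; ring.
Qed.

End Flat.

Section P5Wrap.
Local Open Scope quotient_scope.

Definition propb (T : Type) (P : T -> Prop) : pred T :=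
  fun x => if excluded_middle_informative (P x) then true else false.

Lemma propbE (T : Type) (P : T -> Prop) x : propb P x <-> P x.
Proof. by rewrite /propb; case: excluded_middle_informative. Qed.

Section QuotDef.
Variables (R : comNzRingType) (I : R -> Prop).
Hypotheses (I0 : I 0) (I1 : ~ I 1) (Ilin : forall a u v, I u -> I v -> I (a * u + v)).

Lemma propb_idealr : idealr_closed (propb I).
Proof.
split.
- by apply/propbE.
- by apply/negP => /propbE.
- by move=> a u v /propbE hu /propbE hv; apply/propbE; apply: Ilin.
Qed.

Definition qideal : idealr R :=
  HB.pack (propb I) (isIdealr.Build R (propb I) propb_idealr).

Definition QR : comNzRingType := {ideal_quot qideal}.

Definition piq (x : R) : QR := \pi_QR x.

Lemma piq_eq x y : piq x = piq y <-> I (x - y).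
Proof.
rewrite /piq; split.
  by move=> h; apply/(propbE I); have := Quotient.idealrBE qideal x y; rewrite h eqxx.
move=> h; apply/eqP; rewrite -Quotient.idealrBE; exact/propbE.
Qed.

Lemma piq_add : additive piq.
Proof. by move=> x y; rewrite /piq pi_addr pi_oppr. Qed.
Lemma piq_mul : multiplicative piq.
Proof. by split; [move=> x y; rewrite /piq pi_mulr | rewrite /piq pi_oner]. Qed.

Definition piqM : {rmorphism R -> QR} := mk_rmorph piq_add piq_mul.

Lemma piqM_eq x y : piqM x = piqM y <-> I (x - y).
Proof. exact: piq_eq. Qed.

Lemma piqM_surj (z : QR) : exists x, piqM x = z.
Proof. by exists (repr z); rewrite /= /piq reprK. Qed.

End QuotDef.

Section QLift.
Variables (R S : comNzRingType) (I : R -> Prop) (J : S -> Prop).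
Hypotheses (I0 : I 0) (I1 : ~ I 1) (Ilin : forall a u v, I u -> I v -> I (a * u + v)).
Hypotheses (J0 : J 0) (J1 : ~ J 1) (Jlin : forall a u v, J u -> J v -> J (a * u + v)).
Variable g : {rmorphism R -> S}.
Hypothesis hg : forall x, I x -> J (g x).

Local Notation QI := (QR I0 I1 Ilin).
Local Notation QJ := (QR J0 J1 Jlin).

Definition qlift (z : QI) : QJ := piqM J0 J1 Jlin (g (repr z)).

Lemma qliftE x : qlift (piqM I0 I1 Ilin x) = piqM J0 J1 Jlin (g x).
Proof.
rewrite /qlift; apply/piqM_eq; rewrite -rmorphB; apply: hg.
by apply/(piqM_eq I0 I1 Ilin); rewrite /= /piq reprK.
Qed.

Lemma qlift_add : additive qlift.
Proof.
move=> z1 z2; have [x1 <-] := piqM_surj z1; have [x2 <-] := piqM_surj z2.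
by rewrite -rmorphB !qliftE !rmorphB.
Qed.

Lemma qlift_mul : multiplicative qlift.
Proof.
split; last by rewrite -(rmorph1 (piqM I0 I1 Ilin)) qliftE !rmorph1.
move=> z1 z2; have [x1 <-] := piqM_surj z1; have [x2 <-] := piqM_surj z2.
by rewrite -rmorphM !qliftE !rmorphM.
Qed.

Definition qliftM : {rmorphism QI -> QJ} := mk_rmorph qlift_add qlift_mul.

Lemma qliftME x : qliftM (piqM I0 I1 Ilin x) = piqM J0 J1 Jlin (g x).
Proof. exact: qliftE. Qed.

End QLift.

End P5Wrap.


Lemma natp_exp0 (R : pzRingType) (p : nat) (x : R) : (1 < p)%N -> x * x = 0 -> x ^+ p = 0.
Proof. by case: p => [|[|e]] // _ hx; rewrite exprSr exprSr -mulrA hx mulr0. Qed.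

Section Backward.
Variables (k : fieldType) (p : nat) (W : comNzRingType).
Variables (piW : {rmorphism W -> k}) (sigma : {rmorphism W -> W}) (n m : nat).
Variables (f : 'I_m -> {mpoly k[n]}) (ft : 'I_m -> {mpoly W[n]}) (Pf : 'I_m -> {mpoly k[n]}).
Hypothesis Hprime : prime p.
Hypothesis Hchar : p \in [pchar k].
Hypothesis HW : is_W2 p piW sigma.
Hypothesis hreg : regular_seq f.
Hypothesis hft : forall i, map_mpoly piW (ft i) = f i.
Hypothesis hP : forall i, is_P p piW sigma (ft i) (Pf i).
Variables (h : 'I_n -> {mpoly k[n]}) (g : 'I_m -> {mpoly k[n]}).
Hypothesis hhg : forall i, in_ideal f (Pf i + g i ^+ p
                  - \sum_(j < n) (mderiv j (f i)) ^+ p * h j).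

Local Notation red := (map_mpoly (n:=n) piW).

Lemma backward : frobenius_liftable p piW sigma f.
Proof.
have pp0 := pW_pp Hchar HW.
have mpp := mp_pp n Hchar HW.
have [u hu] := @choice_fun 'I_m {mpoly W[n]} (fun i a => red a = g i) (fun i => red_surj HW (g i)).
have [ht hht] := @choice_fun 'I_n {mpoly W[n]} (fun j a => red a = - h j) (fun j => red_surj HW (- h j)).
have [Pt hPt] := @choice_fun 'I_m {mpoly W[n]}
   (fun i a => red a = Pf i /\ p%:R *: a = Ftilde p sigma (ft i) - ft i ^+ p) hP.
pose F i := ft i + p%:R * u i.
have hF : forall i, red (F i) = f i.
  by move=> i; rewrite /F rmorphD /= (red_p _ Hchar) addr0 hft.
pose IA := in_ideal F.
have IA0 : IA 0 := in_ideal0 F.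
have IA1 : ~ IA 1.
  move=> [c hc]; case: hreg => _; apply; exists (fun j => red (c j)).
  by rewrite -(rmorph1 red) hc rmorph_sum; apply: eq_bigr => j _; rewrite rmorphM /= hF.
have IAlin : forall a x y, IA x -> IA y -> IA (a * x + y).
  by move=> a x y hx hy; apply: in_idealD => //; apply: in_idealMl.
pose IB := in_ideal f.
have IB0 : IB 0 := in_ideal0 f.
have IB1 : ~ IB 1 by case: hreg.
have IBlin : forall a x y, IB x -> IB y -> IB (a * x + y).
  by move=> a x y hx hy; apply: in_idealD => //; apply: in_idealMl.
have hred : forall x, IA x -> IB (red x).
  move=> x [c ->]; exists (fun j => red (c j)); rewrite rmorph_sum; apply: eq_bigr => j _.
  by rewrite rmorphM /= hF.
pose ps := psi p sigma ht.
have hkey : forall i, IA (ps (F i)).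
  move=> i.
  have hT := taylor sigma pp0 ht (F i).
  rewrite /ps hT /Tay.
  have -> : FT p n sigma (F i) = ft i ^+ p + p%:R * Pt i + p%:R * FT p n sigma (u i).
    rewrite /F rmorphD rmorphM /= rmorph_nat -FtildeE.
    have := (hPt i).2; rewrite -mul_mpolyC mpolyC_nat => ->; ring.
  have -> : Ed p sigma ht (F i) = Ed p sigma ht (ft i) + p%:R * Ed p sigma ht (u i).
    rewrite /F EdD EdM -mpolyC_nat EdC rmorph_nat -mpolyC_nat; ring.
  set st := Pt i + FT p n sigma (u i) + Ed p sigma ht (ft i).
  have -> : ft i ^+ p + p%:R * Pt i + p%:R * FT p n sigma (u i) +
     p%:R * (Ed p sigma ht (ft i) + p%:R * Ed p sigma ht (u i)) =
     ft i ^+ p + p%:R * st + (p%:R * p%:R) * Ed p sigma ht (u i) by rewrite /st; ring.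
  rewrite mpp mul0r addr0; apply: in_idealD.
  - have E := subrXX (ft i) (- (p%:R * u i)) p.
    have E2 : (- (p%:R * u i)) ^+ p = 0 :> {mpoly W[n]}.
      apply: (natp_exp0 (prime_gt1 Hprime)).
      by rewrite mulrNN mulrACA mpp mul0r.
    have -> : ft i ^+ p = F i * \sum_(i0 < p) ft i ^+ (p.-1 - i0) * (- (p%:R * u i)) ^+ i0.
      have -> : F i = ft i - - (p%:R * u i) by rewrite /F opprK.
      by rewrite -E E2 subr0.
    by rewrite mulrC; apply: in_idealMl; apply: in_ideal_gen.
  - apply: (lift_ideal Hchar HW hF).
    have -> : red st = Pf i + g i ^+ p - \sum_(j < n) (mderiv j (f i)) ^+ p * h j.
      rewrite /st !rmorphD /= (hPt i).1 -FtildeE (red_Ftilde Hchar HW) hu.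
      rewrite /Ed rmorph_sum /= -sumrN; congr (_ + _); apply: eq_bigr => j _.
      by rewrite rmorphM /= -FtildeE (red_Ftilde Hchar HW) hht red_mderiv hft mulrN.
    exact: hhg.
have hps : forall x, IA x -> IA (ps x).
  move=> x [c ->]; rewrite rmorph_sum; apply: in_ideal_sum => j.
  by rewrite rmorphM; apply: in_idealMl; apply: hkey.
pose At := QR IA0 IA1 IAlin.
pose B := QR IB0 IB1 IBlin.
pose piAt := piqM IA0 IA1 IAlin.
pose q := piqM IB0 IB1 IBlin.
pose iota : {rmorphism W -> At} := piAt \o @mpolyC n W.
pose piA : {rmorphism At -> B} := qliftM IA0 IA1 IAlin IB0 IB1 IBlin hred.
pose Ft : {rmorphism At -> At} := qliftM IA0 IA1 IAlin IA0 IA1 IAlin hps.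
have iotap : iota p%:R = piAt p%:R by rewrite /iota /= -mpolyC_nat.
exists At, iota, Ft, B, q, piA.
split; [|split; [|split; [|split; [|split; [|split; [|split]]]]]].
- move=> a; have [a0 <-] := piqM_surj a; rewrite iotap -rmorphM -(rmorph0 piAt).
  move/piqM_eq; rewrite subr0 => /(flat_quot Hchar HW hF hreg) [b hb].
  exists (piAt b); rewrite -rmorphM; exact/(piqM_eq IA0 IA1 IAlin).
- move=> a; have [a0 <-] := piqM_surj a; split.
  + rewrite /piA qliftME -(rmorph0 q) => /(piqM_eq IB0 IB1 IBlin); rewrite subr0.
    move/(lift_ideal2 HW hF) => [b hb]; exists (piAt b); rewrite iotap -rmorphM.
    exact/(piqM_eq IA0 IA1 IAlin).
  + move=> [b ->]; have [b0 <-] := piqM_surj b.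
    rewrite iotap -rmorphM /piA qliftME -(rmorph0 q); congr (q _); exact: red_p.
- move=> b; have [r <-] := piqM_surj b; have [a ha] := red_surj HW r.
  by exists (piAt a); rewrite /piA qliftME; congr (q _).
- move=> r; rewrite -(rmorph0 q); split.
    by move/(piqM_eq IB0 IB1 IBlin); rewrite subr0.
  by move=> hr; apply/(piqM_eq IB0 IB1 IBlin); rewrite subr0.
- exact: piqM_surj.
- move=> w; have -> : iota w = piAt w%:MP by [].
  by rewrite /piA qliftME; congr (q _); exact: map_mpolyC.
- move=> w; have -> : iota w = piAt w%:MP by [].
  have -> : iota (sigma w) = piAt (sigma w)%:MP by [].
  by rewrite /Ft qliftME; congr (piAt _); rewrite /ps /psi /= mmapC.
- move=> a; have [a0 <-] := piqM_surj a.
  rewrite [Ft _]qliftME /piA !qliftME -rmorphXn; congr (q _).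
  rewrite /ps (taylor sigma pp0) /Tay rmorphD /= -FtildeE (red_Ftilde Hchar HW).
  by rewrite (red_p _ Hchar) addr0.
Qed.

End Backward.


Lemma psiF_decomp (p n : nat) (W : comNzRingType) (sigma : {rmorphism W -> W})
  (pp0 : (p%:R * p%:R : W) = 0) (ht : 'I_n -> {mpoly W[n]}) (Hp : (1 < p)%N)
  (ft u Pt : {mpoly W[n]}) :
  p%:R *: Pt = Ftilde p sigma ft - ft ^+ p ->
  exists S, psi p sigma ht (ft + p%:R * u) =
     (ft + p%:R * u) * S + p%:R * (Pt + FT p n sigma u + Ed p sigma ht ft).
Proof.
move=> hPt.
have mpp := mpp0 n pp0.
set F := ft + p%:R * u.
have hT := taylor sigma pp0 ht F.
rewrite hT /Tay.
have -> : FT p n sigma F = ft ^+ p + p%:R * Pt + p%:R * FT p n sigma u.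
  rewrite /F rmorphD rmorphM /= rmorph_nat -FtildeE.
  move: hPt; rewrite -mul_mpolyC mpolyC_nat => ->; ring.
have -> : Ed p sigma ht F = Ed p sigma ht ft + p%:R * Ed p sigma ht u.
  rewrite /F EdD EdM -mpolyC_nat EdC rmorph_nat -mpolyC_nat; ring.
have E := subrXX ft (- (p%:R * u)) p.
have E2 : (- (p%:R * u)) ^+ p = 0 :> {mpoly W[n]}.
  apply: (natp_exp0 Hp).
  by rewrite mulrNN mulrACA mpp mul0r.
have Eft : ft ^+ p = F * \sum_(i0 < p) ft ^+ (p.-1 - i0) * (- (p%:R * u)) ^+ i0.
  have -> : F = ft - - (p%:R * u) by rewrite /F opprK.
  by rewrite -E E2 subr0.
exists (\sum_(i0 < p) ft ^+ (p.-1 - i0) * (- (p%:R * u)) ^+ i0).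
rewrite Eft.
have -> : F * (\sum_(i0 < p) ft ^+ (p.-1 - i0) * (- (p%:R * u)) ^+ i0) + p%:R * Pt + p%:R * FT p n sigma u +
   p%:R * (Ed p sigma ht ft + p%:R * Ed p sigma ht u) =
   F * (\sum_(i0 < p) ft ^+ (p.-1 - i0) * (- (p%:R * u)) ^+ i0) + p%:R * (Pt + FT p n sigma u + Ed p sigma ht ft)
   + (p%:R * p%:R) * Ed p sigma ht u by ring.
by rewrite mpp mul0r addr0.
Qed.

Lemma red_st (k : fieldType) (p : nat) (W : comNzRingType) (piW : {rmorphism W -> k})
  (sigma : {rmorphism W -> W}) (n : nat) (Hchar : p \in [pchar k]) (HW : is_W2 p piW sigma)
  (ht : 'I_n -> {mpoly W[n]}) (ft u Pt : {mpoly W[n]}) :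
  map_mpoly piW (Pt + FT p n sigma u + Ed p sigma ht ft) =
  map_mpoly piW Pt + map_mpoly piW u ^+ p
  + \sum_(j < n) (mderiv j (map_mpoly piW ft)) ^+ p * map_mpoly piW (ht j).
Proof.
rewrite !rmorphD /= -FtildeE (red_Ftilde Hchar HW); congr (_ + _).
rewrite /Ed rmorph_sum /=; apply: eq_bigr => j _.
by rewrite rmorphM /= -FtildeE (red_Ftilde Hchar HW) red_mderiv.
Qed.

Section Forward.
Variables (k : fieldType) (p : nat) (W : comNzRingType).
Variables (piW : {rmorphism W -> k}) (sigma : {rmorphism W -> W}) (n m : nat).
Variables (f : 'I_m -> {mpoly k[n]}) (ft : 'I_m -> {mpoly W[n]}) (Pf : 'I_m -> {mpoly k[n]}).
Hypothesis Hprime : prime p.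
Hypothesis Hchar : p \in [pchar k].
Hypothesis HW : is_W2 p piW sigma.
Hypothesis hft : forall i, map_mpoly piW (ft i) = f i.
Hypothesis hP : forall i, is_P p piW sigma (ft i) (Pf i).
Variables (At : comNzRingType) (iota : {rmorphism W -> At}) (Ft : {rmorphism At -> At}).
Variables (B : comPzRingType) (q : {rmorphism {mpoly k[n]} -> B}) (piA : {rmorphism At -> B}).
Hypothesis H1 : forall a : At, iota p%:R * a = 0 -> exists b : At, a = iota p%:R * b.
Hypothesis H2 : forall a : At, piA a = 0 <-> exists b : At, a = iota p%:R * b.
Hypothesis H3 : forall b : B, exists a : At, piA a = b.
Hypothesis H4 : forall r : {mpoly k[n]}, q r = 0 <-> in_ideal f r.
Hypothesis H5 : forall b : B, exists r : {mpoly k[n]}, q r = b.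
Hypothesis H6 : forall w : W, piA (iota w) = q (piW w)%:MP_[n].
Hypothesis H7 : forall w : W, Ft (iota w) = iota (sigma w).
Hypothesis H8 : forall a : At, piA (Ft a) = piA a ^+ p.

Local Notation red := (map_mpoly (n:=n) piW).

Lemma forward : exists (h : 'I_n -> {mpoly k[n]}) (g : 'I_m -> {mpoly k[n]}),
    forall i : 'I_m,
      in_ideal f (Pf i + g i ^+ p
                  - \sum_(j < n) (mderiv j (f i)) ^+ p * h j).
Proof.
have pp0 := pW_pp Hchar HW.
have iotap : iota p%:R = p%:R by rewrite rmorph_nat.
have [X hX] := @choice_fun 'I_n At (fun i x => piA x = q 'X_i) (fun i => H3 (q 'X_i)).
pose phi : {rmorphism {mpoly W[n]} -> At} := mmap iota X.
have hphi : forall c, piA (phi c) = q (red c).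
  apply: (@mpoly_rmorph_ext n W B (piA \o phi) (q \o red)).
  - by move=> c; rewrite /= mmapC H6 map_mpolyC.
  - by move=> i; rewrite /= mmapX mmap1U hX map_mpolyX.
have phip : forall c, phi (p%:R * c) = iota p%:R * phi c by move=> c; rewrite rmorphM rmorph_nat iotap.
have pdec : forall b : At, exists c, iota p%:R * b = phi (p%:R * c).
  move=> b; have [r hr] := H5 (piA b); have [c hc] := red_surj HW r.
  have : piA (b - phi c) = 0 by rewrite rmorphB hphi hc hr subrr.
  move/H2 => [e he]; exists c.
  have -> : b = phi c + iota p%:R * e by rewrite -he; ring.
  rewrite phip mulrDr mulrA -rmorphM pp0 rmorph0 mul0r addr0 //.
have hex : forall j, exists c, Ft (X j) = phi ('X_j ^+ p + p%:R * c).
  move=> j.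
  have : piA (Ft (X j) - X j ^+ p) = 0 by rewrite rmorphB rmorphXn H8 subrr.
  move/H2 => [b hb]; have [c hc] := pdec b; exists c.
  rewrite rmorphD rmorphXn /= mmapX mmap1U -hc -hb; ring.
have [ht hht] := @choice_fun 'I_n {mpoly W[n]} (fun j c => Ft (X j) = phi ('X_j ^+ p + p%:R * c)) hex.
pose ps := psi p sigma ht.
have hcomm : forall c, Ft (phi c) = phi (ps c).
  apply: (@mpoly_rmorph_ext n W At (Ft \o phi) (phi \o ps)).
  - by move=> c; rewrite /= !mmapC /= H7.
  - by move=> j; rewrite /= !mmapX !mmap1U hht.
have vex : forall i, exists c, phi (ft i) = phi (p%:R * (- c)).
  move=> i.
  have : piA (phi (ft i)) = 0 by rewrite hphi hft; apply/H4; exact: in_ideal_gen.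
  move/H2 => [b hb]; have [c hc] := pdec b; exists (- c).
  by rewrite opprK hb hc.
have [v hv] := @choice_fun 'I_m {mpoly W[n]} (fun i c => phi (ft i) = phi (p%:R * (- c))) vex.
have [Pt hPt] := @choice_fun 'I_m {mpoly W[n]}
   (fun i a => red a = Pf i /\ p%:R *: a = Ftilde p sigma (ft i) - ft i ^+ p) hP.
exists (fun j => - red (ht j)), (fun i => red (v i)) => i.
pose F := ft i + p%:R * v i.
have hF0 : phi F = 0.
  rewrite rmorphD hv (phip (- v i)) (phip (v i)) rmorphN mulrN addNr //.
have [S hS] := psiF_decomp pp0 ht (prime_gt1 Hprime) (v i) (hPt i).2.
set st := Pt i + FT p n sigma (v i) + Ed p sigma ht (ft i) in hS.
have : phi (p%:R * st) = 0.
  have := hcomm F; rewrite hF0 rmorph0 /ps hS rmorphD rmorphM hF0 mul0r add0r => <-.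
  by [].
rewrite phip => /H1 [b hb].
have : piA (phi st) = 0 by apply/H2; exists b.
rewrite hphi => /H4.
rewrite /st red_st // (hPt i).1 hft.
have -> : \sum_(j < n) mderiv j (f i) ^+ p * red (ht j) =
          - \sum_(j < n) mderiv j (f i) ^+ p * - red (ht j).
  by rewrite -sumrN; apply: eq_bigr => j _; rewrite mulrN opprK.
by [].
Qed.

End Forward.

Unset Implicit Arguments.

Theorem theorem4p6 (k : fieldType) (p : nat) (W : comNzRingType)
    (piW : {rmorphism W -> k}) (sigma : {rmorphism W -> W}) (n m : nat)
    (f : 'I_m -> {mpoly k[n]}) (ft : 'I_m -> {mpoly W[n]})
    (Pf : 'I_m -> {mpoly k[n]}) :
  prime p -> p \in [pchar k] -> perfect_field k p ->
  is_W2 p piW sigma ->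
  regular_seq f ->
  (forall i : 'I_m, map_mpoly piW (ft i) = f i) ->
  (forall i : 'I_m, is_P p piW sigma (ft i) (Pf i)) ->
  frobenius_liftable p piW sigma f <->
  exists (h : 'I_n -> {mpoly k[n]}) (g : 'I_m -> {mpoly k[n]}),
    forall i : 'I_m,
      in_ideal f (Pf i + g i ^+ p
                  - \sum_(j < n) (mderiv j (f i)) ^+ p * h j).
Proof.
move=> Hprime Hchar _ HW hreg hft hP; split; last first.
  by move=> [h [g hhg]]; exact: (backward Hprime Hchar HW hreg hft hP hhg).
move=> [At [iota [Ft [B [q [piA [H1 [H2 [H3 [H4 [H5 [H6 [H7 H8]]]]]]]]]]]]].
have nz : (1 : At) != 0.
  apply/eqP => h10; case: hreg => _; apply; apply/H4.
  by rewrite rmorph1; have := congr1 piA h10; rewrite rmorph1 rmorph0.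
pose AtN : comNzRingType := HB.pack At (GRing.PzSemiRing_isNonZero.Build At nz).
have ia : additive (iota : W -> AtN) by move=> x y; exact: rmorphB.
have im : multiplicative (iota : W -> AtN) by split; [exact: rmorphM | exact: rmorph1].
have fa : additive (Ft : AtN -> AtN) by move=> x y; exact: rmorphB.
have fm : multiplicative (Ft : AtN -> AtN) by split; [exact: rmorphM | exact: rmorph1].
have pa : additive (piA : AtN -> B) by move=> x y; exact: rmorphB.
have pm : multiplicative (piA : AtN -> B) by split; [exact: rmorphM | exact: rmorph1].
exact: (@forward k p W piW sigma n m f ft Pf Hprime Hchar HW hft hP AtN
  (mk_rmorph ia im) (mk_rmorph fa fm) B q (mk_rmorph pa pm) H1 H2 H3 H4 H5 H6 H7 H8).
Qed.
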